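(* Let $R\ge1$, $m\ge R+2$, let $A$ be a real $m\times R$ matrix with $\operatorname{rank}(A)=R$ and $\iota_m\notin\operatorname{col}(A)$, let $C$ be a real symmetric positive semidefinite $m\times m$ matrix, and suppose $\operatorname{null}\big((A,\iota_m)^\top\big)\not\subseteq\operatorname{null}(C)$. Let $v^\ast$ be any minimiser of $v^\top Cv$ over $\mathcal V=\{v\in\mathbb R^m: v^\top A=0_R^\top,\ v^\top\iota_m=1\}$. Then there exists at least one vector $u^\ast\in\mathbb R^m$ such that $$u^{\ast\top}A=0_R^\top,\qquad u^{\ast\top}\iota_m=0,\qquad u^{\ast\top}Cu^\ast=v^{\ast\top}Cv^\ast,$$ and any such $u^\ast$ satisfies $u^{\ast\top}Cv^\ast=0$.
   Context: $\iota_m$ is the $m$-vector of ones; $0_R$ the zero vector in $\mathbb R^R$; $\operatorname{col}$ and $\operatorname{null}$ denote column space and null space; $(A,\iota_m)$ is the $m\times(R+1)$ matrix obtained by appending $\iota_m$ as a last column to $A$. A vector $u^\ast$ as in the claim is called a variance weights vector. *)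

(* Defs.v *)
From mathcomp Require Import all_boot all_order all_algebra.
From mathcomp Require Import reals.
Set Implicit Arguments. Unset Strict Implicit. Unset Printing Implicit Defensive.
Import Order.TTheory GRing.Theory Num.Theory.
Local Open Scope ring_scope.

Definition ones (R : ringType) (m : nat) : 'cV[R]_m := const_mx 1.

Definition augm (F : ringType) (m r : nat) (A : 'M[F]_(m, r)) : 'M[F]_(m, r + 1) :=
  row_mx A (ones F m).

(* column space membership: x in col(A) iff x^T in rowspace(A^T) *)
Definition in_col (F : fieldType) (m r : nat) (A : 'M[F]_(m, r)) (x : 'cV[F]_m) : bool :=
  (x^T <= A^T)%MS.

Definition in_null (F : ringType) (p m : nat) (B : 'M[F]_(p, m)) (x : 'cV[F]_m) : Prop :=
  B *m x = 0.

Definition psd (F : realFieldType) (m : nat) (C : 'M[F]_m) : Prop :=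
  C^T = C /\ forall x : 'cV[F]_m, 0 <= (x^T *m C *m x) 0 0.

Definition qf (F : ringType) (m : nat) (C : 'M[F]_m) (v : 'cV[F]_m) : F :=
  (v^T *m C *m v) 0 0.

Definition bf (F : ringType) (m : nat) (C : 'M[F]_m) (u v : 'cV[F]_m) : F :=
  (u^T *m C *m v) 0 0.

Definition feasible (F : ringType) (m r : nat) (A : 'M[F]_(m, r)) (v : 'cV[F]_m) : Prop :=
  v^T *m A = 0 /\ (v^T *m ones F m) 0 0 = 1.

(* Main.v *)
Require Import Defs.
From mathcomp Require Import all_boot all_order all_algebra.
From mathcomp Require Import reals.
From mathcomp Require Import ring lra.
From Stdlib Require Import Classical.
Import Order.TTheory GRing.Theory Num.Theory.
Local Open Scope ring_scope.

Lemma quad0 (F : realFieldType) (a c : F) :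
  0 <= c -> (forall t, 0 <= t * a + t ^+ 2 * c) -> a = 0.
Proof.
move=> hc h.
have hc1 : c + 1 != 0 by rewrite gt_eqF // ltr_wpDl.
have e : (- a / (c + 1)) * a + (- a / (c + 1)) ^+ 2 * c = - (a / (c + 1)) ^+ 2.
  by field.
have := h (- a / (c + 1)); rewrite e oppr_ge0 => hle.
have : (a / (c + 1)) ^+ 2 = 0 by apply/le_anti; rewrite hle sqr_ge0.
move/eqP; rewrite sqrf_eq0 mulf_eq0 invr_eq0 (negPf hc1) orbF.
by move/eqP.
Qed.

Lemma lin_aux (F : realFieldType) (X Y Z : F) :
  0 <= Y * (3 / 4) -> Z <= Z + X + Y / 4 -> 0 <= X + Y.
Proof. move=> h1 h2. lra. Qed.

Lemma qf_expand (F : comRingType) m (C : 'M[F]_m) x y (t : F) :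
  qf C (x + t *: y) = qf C x + t * (bf C x y + bf C y x) + t ^+ 2 * qf C y.
Proof.
rewrite /qf /bf mulmxDr -scalemxAr [(x + _)^T]linearD /= [(t *: y)^T]linearZ /=.
rewrite !mulmxDl -!scalemxAl !mxE. ring.
Qed.

Lemma bf_sym (F : comRingType) m (C : 'M[F]_m) x y :
  C^T = C -> bf C y x = bf C x y.
Proof.
move=> hC; rewrite /bf.
have tr1 : forall M : 'M[F]_1, M 0 0 = M^T 0 0 by move=> M; rewrite mxE.
by rewrite tr1 !trmx_mul trmxK hC mulmxA.
Qed.

Lemma psd_null (F : realFieldType) m (C : 'M[F]_m) x :
  psd C -> qf C x = 0 -> C *m x = 0.
Proof.
move=> [hC hp] hq.
have hb : forall y, bf C y x = 0.
  move=> y. rewrite (@bf_sym _ _ C x y hC).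
  apply: (@quad0 _ _ (qf C y)); first exact: hp.
  move=> t. have := hp (x + (t / 2) *: y). rewrite -/(qf C _) qf_expand hq.
  rewrite (@bf_sym _ _ C x y hC).
  have -> : t / 2 * (bf C x y + bf C x y) = t * bf C x y by field.
  have -> : 0 + t * bf C x y + (t / 2) ^+ 2 * qf C y = t * bf C x y + t ^+ 2 * ((qf C y)/4) by field.
  move=> H. have h4 : 0 <= t ^+ 2 * (qf C y) * (3/4).
    by apply: mulr_ge0; [apply: mulr_ge0; [apply: sqr_ge0 | apply: hp] | lra].
  lra.
apply/matrixP => i j; rewrite (ord1 j) [RHS]mxE.
have := hb (delta_mx i 0). rewrite /bf trmx_delta -mulmxA -rowE mxE.
done.
Qed.

Theorem theorem2 (F : realType) (m r : nat) (A : 'M[F]_(m, r)) (C : 'M[F]_m)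
  (vstar : 'cV[F]_m) :
  (1 <= r)%N -> (r + 2 <= m)%N ->
  \rank A = r ->
  ~~ in_col A (ones F m) ->
  psd C ->
  ~ (forall x : 'cV[F]_m, in_null (augm A)^T x -> in_null C x) ->
  feasible A vstar ->
  (forall v : 'cV[F]_m, feasible A v -> qf C vstar <= qf C v) ->
  (exists u : 'cV[F]_m,
      u^T *m A = 0 /\ (u^T *m ones F m) 0 0 = 0 /\ qf C u = qf C vstar) /\
  (forall u : 'cV[F]_m,
      u^T *m A = 0 -> (u^T *m ones F m) 0 0 = 0 -> qf C u = qf C vstar ->
      bf C u vstar = 0).
Proof.
move=> _ _ _ _ hpsd hnull [hvA hv1] hmin.
have [hC hp] := hpsd.
split.
- have [x hx] := not_all_ex_not _ _ hnull.
  have [hxN hxC] := imply_to_and _ _ hx.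
  move: hxN; rewrite /in_null /augm tr_row_mx mul_col_mx => h0.
  have [hxA hx1] := eq_col_mx (etrans h0 (esym (col_mx0 _ _ _ _))).
  have hqx : 0 < qf C x.
    rewrite lt_def hp andbT; apply/eqP => e; apply: hxC; exact: psd_null.
  pose k := Num.sqrt (qf C vstar / qf C x).
  exists (k *: x); split; [|split].
  + have hxA' : x^T *m A = 0 by rewrite -(trmxK A) -trmx_mul hxA trmx0.
    by rewrite [(k *: x)^T]linearZ /= -scalemxAl hxA' scaler0.
  + have hx1' : x^T *m ones F m = 0.
      by rewrite -(trmxK (ones F m)) -trmx_mul hx1 trmx0.
    by rewrite [(k *: x)^T]linearZ /= -scalemxAl hx1' scaler0 mxE.
  + have e : (k *: x)^T *m C *m (k *: x) = (k ^+ 2) *: (x^T *m C *m x).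
      by rewrite [(k *: x)^T]linearZ /= -scalemxAl -!scalemxAr -scalemxAl scalerA expr2.
    rewrite /qf e mxE -/(qf C x).
    rewrite sqr_sqrtr; first by rewrite mulfVK // gt_eqF.
    by rewrite divr_ge0 // ?hp // ltW.
- move=> u huA hu1 hqu.
  apply: (@quad0 _ _ (qf C u)); first exact: hp.
  move=> t.
  have hf : feasible A (vstar + (t / 2) *: u).
    split.
    + by rewrite [(_ + _)^T]linearD /= [(_ *: u)^T]linearZ /= mulmxDl -scalemxAl hvA huA scaler0 addr0.
    + rewrite [(_ + _)^T]linearD /= [(_ *: u)^T]linearZ /= mulmxDl -scalemxAl.
      by rewrite [LHS]mxE [X in _ + X]mxE hv1 hu1 mulr0 addr0.
  have := hmin _ hf. rewrite qf_expand (@bf_sym _ _ C u vstar hC).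
  have -> : t / 2 * (bf C u vstar + bf C u vstar) = t * bf C u vstar by field.
  have h4 : 0 <= t ^+ 2 * (qf C u) * (3/4).
    by apply: mulr_ge0; [apply: mulr_ge0; [apply: sqr_ge0 | apply: hp] | lra].
  have -> : (t / 2) ^+ 2 * qf C u = t ^+ 2 * qf C u / 4 by field.
  move: h4.
  move: (t * bf C u vstar) (t ^+ 2 * qf C u) (qf C vstar) => X Y Z.
  clear; exact: lin_aux.
Qed.
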